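(* Let $\Sigma_\infty$, $\succeq^*$ and $\{\succeq^k\}$ be as in the following setting: $\Sigma_\infty$ is the sequence of experiments whose existence is asserted in the preference-recovery theorem (so that any continuous weakly monotone preferences $\succeq^k$ strongly rationalizing $(\Sigma_k,c_{\succeq^*})$, for a continuous weakly monotone $\succeq^*$, satisfy $\succeq^k\to\succeq^*$ in closed convergence); $\succeq^*$ is a continuous weakly monotone preference on $X$; and each $\succeq^k$ is a continuous weakly monotone preference strongly rationalizing $(\Sigma_k,c_{\succeq^*})$. If in addition $\succeq^*$ and each $\succeq^k$ are standard, with standard representations $(V,u)$ and $(V^k,u^k)$ respectively, then $(V^k,u^k)\to(V,u)$ as $k\to\infty$ in the compact-open topology (i.e. uniformly on compact sets).
   Context: $S$ is a finite nonempty set, $a<b$ reals, $\Delta([a,b])$ the Borel probability measures on $[a,b]$ with the weak topology, $X=\Delta([a,b])^S$ with the product topology. First-order stochastic dominance $p\ge q$: $\int h\,dp\ge\int h\,dq$ for all bounded continuous nondecreasing $h$; for acts $f\ge g$ iff $f(s)\ge g(s)$ for all $s$. A preference is a complete, transitive relation closed in $X\times X$; weakly monotone if $f\ge g\Rightarrow f\succeq g$. Let $\mathcal U$ be the set of continuous nondecreasing $u:[a,b]\to\mathbf{R}$ with $u(a)=0,u(b)=1$. $(V,u)$ is a standard representation if $V:X\to\mathbf{R}$ is continuous, $u\in\mathcal U$, and $V(p,\dots,p)=\int u\,dp$ for all $p$; a preference is standard if weakly monotone and represented by $V$ for some standard representation $(V,u)$. A sequence of experiments is a sequence $\{B_i\}$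 of unordered pairs in $X$, $\Sigma_k=\{B_1,\dots,B_k\}$, $B=\bigcup_iB_i$ dense in $X$, every pair from $B$ appearing as some $B_k$. $c_\succeq(A)=\{x\in A:x\succeq y\ \forall y\in A\}$; $\succeq^k$ strongly rationalizes $(\Sigma_k,c)$ if $c(B_i)=c_{\succeq^k}(B_i)$ for all $B_i\in\Sigma_k$. Closed convergence of closed sets $F^n\to F$ in $X\times X$ means $\mathrm{Li}=F=\mathrm{Ls}$, where $\mathrm{Li}$ ($\mathrm{Ls}$) is the set of points every neighborhood of which meets $F^n$ for all large $n$ (infinitely many $n$). *)

(* Defs.v *)
From HB Require Import structures.
From mathcomp Require Import all_boot all_order all_algebra.
From mathcomp Require Import all_classical all_reals all_analysis.
Set Implicit Arguments. Unset Strict Implicit. Unset Printing Implicit Defensive.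
Import Order.TTheory GRing.Theory Num.Theory numFieldTopology.Exports numFieldNormedType.Exports.
Local Open Scope classical_set_scope.
Local Open Scope ring_scope.

Section Defs.
Variable R : realType.
Variables a b : R.

Definition Iab : set R := [set` `[a, b]].

Definition integ (P : probability R R) (h : R -> R) : R :=
  fine (\int[P]_(x in Iab) (h x)%:E).

(** bounded continuous test functions on [a,b] (continuity on the compact
    [a,b] implies boundedness) *)
Definition CB := {h : R -> R | {within Iab, continuous h}}.

(** Delta([a,b]) : Borel probability measures on R concentrated on [a,b],
    i.e. Borel probability measures on [a,b] *)
Definition lott := {P : probability R R | P Iab = 1%E}.
HB.instance Definition _ := gen_eqMixin lott.
HB.instance Definition _ := gen_choiceMixin lott.

Definition evl (P : lott) : {ptws CB -> R} := fun h => integ (sval P) (sval h).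

(** Delta([a,b]) with the weak topology: the coarsest topology making
    P |-> \int h dP continuous for every bounded continuous h *)
Definition Lott := initial_topology evl.

Variable S : finType.
Definition Act := {ptws S -> Lott}.

Definition const_act (p : Lott) : Act := fun _ => p.

Definition fosd (p q : Lott) : Prop :=
  forall h : R -> R, {within Iab, continuous h} ->
    {in Iab &, {homo h : x y / x <= y}} ->
    integ (sval q) h <= integ (sval p) h.

Definition act_ge (f g : Act) : Prop := forall s, fosd (f s) (g s).

Definition graph (pr : Act -> Act -> Prop) : set (Act * Act) :=
  [set fg | pr fg.1 fg.2].

Definition is_preference (pr : Act -> Act -> Prop) : Prop :=
  (forall f g, pr f g \/ pr g f) /\
  (forall f g h, pr f g -> pr g h -> pr f h) /\
  closed (graph pr).

Definition weakly_monotone (pr : Act -> Act -> Prop) : Prop :=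
  forall f g, act_ge f g -> pr f g.

Definition in_U (u : R -> R) : Prop :=
  {within Iab, continuous u} /\ {in Iab &, {homo u : x y / x <= y}} /\
  u a = 0 /\ u b = 1.

Definition standard_rep (V : Act -> R) (u : R -> R) : Prop :=
  continuous V /\ in_U u /\ forall p : Lott, V (const_act p) = integ (sval p) u.

Definition represents (pr : Act -> Act -> Prop) (V : Act -> R) : Prop :=
  forall f g, pr f g <-> V g <= V f.

Definition cset (pr : Act -> Act -> Prop) (A : set Act) : set Act :=
  [set x | A x /\ forall y, A y -> pr x y].

Definition pairset (B : Act * Act) : set Act := [set B.1] `|` [set B.2].

(** a sequence of experiments B_1, B_2, ... (here indexed from 0) *)
Definition Bunion (B : nat -> Act * Act) : set Act :=
  \bigcup_i pairset (B i).

Definition seq_experiments (B : nat -> Act * Act) : Prop :=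
  (forall i, (B i).1 <> (B i).2) /\
  closure (Bunion B) = setT /\
  (forall x y, Bunion B x -> Bunion B y -> x <> y ->
     exists k, pairset (B k) = [set x] `|` [set y]).

(** pr strongly rationalizes (Sigma, c) where Sigma = {B i | i <= k} *)
Definition strongly_rationalizes (pr : Act -> Act -> Prop) (B : nat -> Act * Act)
  (k : nat) (c : set Act -> set Act) : Prop :=
  forall i, (i <= k)%N -> c (pairset (B i)) = cset pr (pairset (B i)).

Definition Li (F : nat -> set (Act * Act)) : set (Act * Act) :=
  [set z | forall U, nbhs z U -> \forall n \near \oo, (F n `&` U) !=set0].
Definition Ls (F : nat -> set (Act * Act)) : set (Act * Act) :=
  [set z | forall U, nbhs z U ->
     forall N, exists2 n, (N <= n)%N & (F n `&` U) !=set0].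
Definition closed_cvg (F : nat -> set (Act * Act)) (G : set (Act * Act)) : Prop :=
  Li F = G /\ Ls F = G.

(** the recovery property of the preference-recovery theorem *)
Definition recovers (B : nat -> Act * Act) : Prop :=
  forall pstar : Act -> Act -> Prop,
    is_preference pstar -> weakly_monotone pstar ->
  forall prefs : nat -> Act -> Act -> Prop,
    (forall k, is_preference (prefs k) /\ weakly_monotone (prefs k) /\
       strongly_rationalizes (prefs k) B k (cset pstar)) ->
    closed_cvg (fun k => graph (prefs k)) (graph pstar).

End Defs.

(* Main.v *)
Require Import Defs.
From HB Require Import structures.
From mathcomp Require Import all_boot all_order all_algebra.
From mathcomp Require Import all_classical all_reals all_analysis.
From mathcomp Require Import measurable_realfun.
From mathcomp Require Import lra.
Import Order.TTheory GRing.Theory Num.Theory numFieldTopology.Exports numFieldNormedType.Exports.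
Local Open Scope classical_set_scope.
Local Open Scope ring_scope.
Section Meas.
Variables (R : realType) (a b : R).
Hypothesis hab : a < b.

Lemma mIab : measurable (Iab a b).
Proof. exact: measurable_itv. Qed.

Lemma cont_meas (h : R -> R) : {within Iab a b, continuous h} ->
  measurable_fun (Iab a b) (EFin \o h).
Proof.
move=> hc; apply/measurable_EFinP.
exact: subspace_continuous_measurable_fun mIab hc.
Qed.

Lemma cont_int (P : probability R R) (h : R -> R) : {within Iab a b, continuous h} ->
  P.-integrable (Iab a b) (EFin \o h).
Proof.
move=> hc; apply: measurable_bounded_integrable.
- exact: mIab.
- by apply: (le_lt_trans (probability_le1 P mIab)); rewrite ltry.
- exact: subspace_continuous_measurable_fun mIab hc.
- have /compact_bounded[M [_ mrt]] := continuous_compact hc (@segment_compact _ a b).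
  by exists M; split; rewrite ?num_real // => ? ? ? ?; exact: mrt.
Qed.

Lemma integ_le (P : probability R R) (hP : P (Iab a b) = 1%E) (h : R -> R) (c : R) :
  {within Iab a b, continuous h} -> (forall x, Iab a b x -> h x <= c) ->
  integ a b P h <= c.
Proof.
move=> hc hle; rewrite /integ.
have E : (\int[P]_(x in Iab a b) (cst c%:E) x)%E = c%:E.
  rewrite (integral_cst P mIab); transitivity (c%:E * 1)%E; last exact: mule1.
  by congr (_ * _)%E; exact: hP.
have -> : c = fine (\int[P]_(x in Iab a b) (cst c%:E) x)%E by rewrite E.
have Hf := integrable_fin_num mIab (cont_int P h hc).
have Hc : (\int[P]_(x in Iab a b) (cst c%:E) x)%E \is a fin_num by rewrite E.
apply: (fine_le Hf Hc).
apply: le_integral; first exact: mIab.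
- exact: (cont_int P h hc).
- exact: finite_measure_integrable_cst mIab.
by move=> x /[!inE] xI /=; rewrite lee_fin hle.
Qed.

Lemma integ_ge (P : probability R R) (hP : P (Iab a b) = 1%E) (h : R -> R) (c : R) :
  {within Iab a b, continuous h} -> (forall x, Iab a b x -> c <= h x) ->
  c <= integ a b P h.
Proof.
move=> hc hle; rewrite /integ.
have E : (\int[P]_(x in Iab a b) (cst c%:E) x)%E = c%:E.
  rewrite (integral_cst P mIab); transitivity (c%:E * 1)%E; last exact: mule1.
  by congr (_ * _)%E; exact: hP.
have -> : c = fine (\int[P]_(x in Iab a b) (cst c%:E) x)%E by rewrite E.
have Hf := integrable_fin_num mIab (cont_int P h hc).
have Hc : (\int[P]_(x in Iab a b) (cst c%:E) x)%E \is a fin_num by rewrite E.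
apply: (fine_le Hc Hf).
apply: le_integral; first exact: mIab.
- exact: finite_measure_integrable_cst mIab.
- exact: (cont_int P h hc).
by move=> x /[!inE] xI /=; rewrite lee_fin hle.
Qed.

End Meas.
Section Lots.
Variables (R : realType) (a b : R).
Hypothesis hab : a < b.

Definition clamp (x : R) : R := Num.min (Num.max x a) b.

Lemma clampI x : Iab a b (clamp x).
Proof.
rewrite /Iab /clamp /= in_itv /= le_min ge_min le_max lexx orbT (ltW hab) lexx.
by rewrite !orbT.
Qed.

Lemma clampE x : Iab a b x -> clamp x = x.
Proof.
rewrite /Iab /clamp /= in_itv /= => /andP[ax xb].
by rewrite (max_idPl ax) (min_idPl xb).
Qed.

Lemma dirac_Iab x : (@dirac _ R (clamp x) R) (Iab a b) = 1%E.
Proof. by rewrite diracE mem_set //; exact: clampI. Qed.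

Definition dlott (x : R) : lott a b :=
  exist _ (@dirac _ R (clamp x) R : probability R R) (dirac_Iab x).

Lemma integ_dlott x h : {within Iab a b, continuous h} ->
  integ a b (sval (dlott x)) h = h (clamp x).
Proof.
move=> hc; rewrite /integ /= (integral_dirac _ (mIab R a b) (cont_meas R a b h hc)).
by rewrite diracE mem_set ?mul1e //; exact: clampI.
Qed.

Definition c01 (t : R) : R := Num.min (Num.max t 0) 1.
Lemma c01_ge0 t : 0 <= c01 t.
Proof. by rewrite /c01 le_min le_max lexx orbT ler01. Qed.
Lemma c01_le1 t : c01 t <= 1.
Proof. by rewrite /c01 ge_min lexx orbT. Qed.
Lemma c01_ge0' t : 0 <= 1 - c01 t.
Proof. by rewrite subr_ge0 c01_le1. Qed.
Lemma c01E t : 0 <= t <= 1 -> c01 t = t.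
Proof. by move=> /andP[t0 t1]; rewrite /c01 (max_idPl t0) (min_idPl t1). Qed.

Definition mixm (t : R) : set R -> \bar R :=
  measure_add (mscale (NngNum (c01_ge0 t)) (@dirac _ R b R))
              (mscale (NngNum (c01_ge0' t)) (@dirac _ R a R)).

Lemma mixm_setT t : mixm t setT = 1%E.
Proof.
rewrite /mixm measure_addE /=; rewrite /mscale /=. rewrite !diracT !mule1.
by rewrite -EFinD addrC subrK.
Qed.

HB.instance Definition _ t := Measure.copy (mixm t) (measure_add (mscale (NngNum (c01_ge0 t)) (@dirac _ R b R)) (mscale (NngNum (c01_ge0' t)) (@dirac _ R a R))).
HB.instance Definition _ t := Measure_isProbability.Build _ _ _ (mixm t) (mixm_setT t).

End Lots.
Section Mix.
Variables (R : realType) (a b : R).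
Hypothesis hab : a < b.

Lemma aI : Iab a b a. Proof. by rewrite /Iab /= in_itv /= lexx (ltW hab). Qed.
Lemma bI : Iab a b b. Proof. by rewrite /Iab /= in_itv /= lexx (ltW hab). Qed.

Lemma mixm_Iab t : (mixm R a b t : probability R R) (Iab a b) = 1%E.
Proof.
change (mixm R a b t (Iab a b) = 1%E); rewrite /mixm measure_addE /=; rewrite /mscale /=.
rewrite !diracE (mem_set aI) (mem_set bI) -!EFinM -EFinD /= !mulr1.
by rewrite addrC subrK.
Qed.

Definition mixlott (t : R) : lott a b :=
  exist _ (mixm R a b t : probability R R) (mixm_Iab t).

Lemma integ_mix (t : R) (u : R -> R) : {within Iab a b, continuous u} ->
  (forall x, Iab a b x -> 0 <= u x) ->
  integ a b (sval (mixlott t)) u = c01 R t * u b + (1 - c01 R t) * u a.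
Proof.
move=> hc h0; rewrite /integ /= /mixm.
have mu := cont_meas R a b u hc.
have h0' : forall x, Iab a b x -> (0 <= (EFin \o u) x)%E by move=> x /h0; rewrite lee_fin.
rewrite (ge0_integral_measure_add _ _ (mIab R a b) h0' mu).
rewrite !(ge0_integral_mscale _ (mIab R a b) _ mu h0').
rewrite !(integral_dirac _ (mIab R a b) mu) !diracE (mem_set aI) (mem_set bI) /=.
by rewrite !mul1r.
Qed.

End Mix.
Lemma initial_cvgP {S : choiceType} {T : topologicalType} (f : S -> T)
  (F : set_system S) (FF : Filter F) (s : S) :
  f @ F --> f s -> F --> (s : initial_topology f).
Proof.
move=> cv A /=; rewrite nbhsE => -[B [[C oC <-] Bs] BA].
rewrite nbhs_filterE; apply: (filterS BA); apply: cv; apply: open_nbhs_nbhs; split => //.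
Qed.

Lemma ptws_cvg {I : Type} {T : topologicalType} (F : set_system {ptws I -> T})
  (FF : Filter F) (g : {ptws I -> T}) :
  (forall i, (fun h => h i) @ F --> g i) -> F --> g.
Proof.
move=> h; apply/cvg_sup => i; exact: initial_cvgP.
Qed.
Section Dcont.
Variables (R : realType) (a b : R).
Hypothesis hab : a < b.
Variable S : finType.

Definition dL (y : R) : Lott a b := dlott R a b hab y.
Definition Gd (y : R) : Act a b S := const_act (dL y).

Lemma dL_h_cvg x (h : CB a b) : Iab a b x ->
  (fun y => integ a b (sval (dL y)) (sval h)) @ within (Iab a b) (nbhs x)
   --> integ a b (sval (dL x)) (sval h).
Proof.
move=> Ix; have hc := svalP h.
rewrite /dL (integ_dlott _ _ _ hab _ _ hc) clampE //.
have H := (subspace_continuousP _ _).1 hc x Ix.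
apply: (cvg_trans _ H).
apply: near_eq_cvg.
near=> y.
rewrite (integ_dlott _ _ _ hab _ _ hc) clampE //.
near: y; exact: withinT.
Unshelve. all: end_near.
Qed.

Lemma dL_cvg x : Iab a b x -> dL @ within (Iab a b) (nbhs x) --> dL x.
Proof.
move=> Ix.
apply: initial_cvgP.
apply: ptws_cvg => h /=.
exact: (dL_h_cvg x h Ix).
Qed.

Lemma Gd_cont : {within Iab a b, continuous Gd}.
Proof.
apply/subspace_continuousP => x Ix.
apply: ptws_cvg => s /=.
exact: dL_cvg.
Qed.

End Dcont.
Section Main.
Variables (R : realType) (a b : R).
Hypothesis hab : a < b.
Variable S : finType.
Local Notation X := (Act a b S).

Lemma inU_ge0 (u : R -> R) : in_U a b u -> forall x, Iab a b x -> 0 <= u x.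
Proof.
move=> [_ [hm [ua _]]] x Ix; rewrite -ua; apply: hm.
- exact: mem_set (aI R a b hab).
- exact: (mem_set Ix).
by move: Ix; rewrite /Iab /= in_itv /= => /andP[].
Qed.

Lemma V_mix (V : X -> R) (u : R -> R) (t : R) : standard_rep V u ->
  V (const_act (mixlott R a b hab t : Lott a b)) = c01 R t.
Proof.
move=> [_ [hu hc]]; rewrite hc.
have [uc [_ [ua ub]]] := hu.
rewrite (integ_mix R a b hab t u uc (inU_ge0 u hu)) ua ub.
by rewrite mulr1 mulr0 addr0.
Qed.

Lemma V_dL (V : X -> R) (u : R -> R) (x : R) : standard_rep V u -> Iab a b x ->
  V (Gd R a b hab S x) = u x.
Proof.
move=> [_ [hu hc]] Ix; rewrite /Gd hc.
have [uc _] := hu.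
by rewrite /dL (integ_dlott _ _ _ hab _ _ uc) clampE.
Qed.

Lemma V_bounds (pr : X -> X -> Prop) (V : X -> R) (u : R -> R) :
  standard_rep V u -> represents pr V -> weakly_monotone pr ->
  forall f, 0 <= V f <= 1.
Proof.
move=> hs hr hw f; apply/andP; split.
- have : pr f (Gd R a b hab S a).
    apply: hw => s h hc hm.
    rewrite /Gd /const_act /dL (integ_dlott _ _ _ hab _ _ hc) clampE; last exact: (aI R a b hab).
    apply: integ_ge => //; first exact: (svalP (f s)).
    move=> y Iy; apply: hm; [exact: mem_set (aI R a b hab) | exact: (mem_set Iy) |].
    by move: Iy; rewrite /Iab /= in_itv /= => /andP[].
  move/hr; rewrite (V_dL V u a hs (aI R a b hab)).
  by have [_ [[_ [_ [-> _]]] _]] := hs.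
- have : pr (Gd R a b hab S b) f.
    apply: hw => s h hc hm.
    rewrite /Gd /const_act /dL (integ_dlott _ _ _ hab _ _ hc) clampE; last exact: (bI R a b hab).
    apply: integ_le => //; first exact: (svalP (f s)).
    move=> y Iy; apply: hm; [exact: (mem_set Iy) | exact: mem_set (bI R a b hab) |].
    by move: Iy; rewrite /Iab /= in_itv /= => /andP[].
  move/hr; rewrite (V_dL V u b hs (bI R a b hab)).
  by have [_ [[_ [_ [_ ->]]] _]] := hs.
Qed.

End Main.
Section Key.
Variables (R : realType) (a b : R).
Hypothesis hab : a < b.
Variable S : finType.
Local Notation X := (Act a b S).
Variables (pstar : X -> X -> Prop) (prefs : nat -> X -> X -> Prop).
Variables (V : X -> R) (u : R -> R) (Vs : nat -> X -> R) (us : nat -> R -> R).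
Hypothesis hLs : forall z, Ls (fun k => graph (prefs k)) z -> graph pstar z.
Hypothesis hstar_wm : weakly_monotone pstar.
Hypothesis hV : standard_rep V u.
Hypothesis hVrep : represents pstar V.
Hypothesis hVs : forall k, standard_rep (Vs k) (us k) /\ represents (prefs k) (Vs k).
Hypothesis hwk : forall k, weakly_monotone (prefs k).

Lemma notLs (z : X * X) : ~ graph pstar z -> exists A B N, nbhs z.1 A /\ nbhs z.2 B /\
  forall n p q, (N <= n)%N -> A p -> B q -> ~ prefs n p q.
Proof.
move=> ng.
have [U [hU [N hN]]] : exists U, nbhs z U /\
    exists N, forall n, (N <= n)%N -> ~ ((graph (prefs n) `&` U) !=set0).
  apply: contrapT => H; apply: ng; apply: hLs => U hU N.
  apply: contrapT => H2; apply: H; exists U; split => //; exists N => n Nn H3.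
  by apply: H2; exists n.
case: z hU ng => z1 z2 hU _.
have [[A B] /= [nA nB] sAB] := hU.
exists A, B, N; split => //; split => // n p q Nn Ap Bq hpq.
by apply: (hN n Nn); exists (p, q); split => //; exact: sAB.
Qed.

Lemma Vs_bnd n y : 0 <= Vs n y <= 1.
Proof. by have [h1 h2] := hVs n; exact: (@V_bounds _ _ _ hab _ _ _ _ h1 h2 (hwk n) y). Qed.

Lemma V_bnd y : 0 <= V y <= 1.
Proof. exact: (@V_bounds _ _ _ hab _ _ _ _ hV hVrep hstar_wm y). Qed.


Lemma Vmix_s (W : X -> R) (w : R -> R) (t : R) : standard_rep W w -> 0 <= t <= 1 ->
  W (const_act (mixlott R a b hab t : Lott a b)) = t.
Proof. by move=> hs ht; rewrite (@V_mix _ _ _ hab _ _ _ t hs) c01E. Qed.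

Lemma upper (x : X) (eps : R) : 0 < eps -> exists (A : set X) (N : nat), nbhs x A /\
  forall n y, (N <= n)%N -> A y -> Vs n y < V x + eps.
Proof.
move=> e0; have /andP[t0 t1] := V_bnd x.
case: (lerP (V x + eps) 1) => [le1|gt1]; last first.
  exists setT, 0%N; split; first exact: filterT.
  move=> n y _ _; have /andP[_ h1] := Vs_bnd n y; exact: le_lt_trans h1 gt1.
pose m : X := const_act (mixlott R a b hab (V x + eps) : Lott a b).
have ht : 0 <= V x + eps <= 1 by apply/andP; split => //; lra.
have Vm : V m = V x + eps by exact: (Vmix_s _ _ _ hV ht).
have ng : ~ graph pstar (x, m).
  by rewrite /graph /= => /hVrep; rewrite Vm; lra.
have [A [B [N [nA [nB HN]]]]] := notLs _ ng.
exists A, N; split => // n y Nn Ay.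
have := HN n y m Nn Ay (nbhs_singleton nB).
have [hs hr] := hVs n.
have Vsm : Vs n m = V x + eps by exact: (Vmix_s _ _ _ hs ht).
move=> H; rewrite ltNge; apply/negP => H2; apply: H; apply/hr.
by rewrite Vsm.
Qed.

Lemma lower (x : X) (eps : R) : 0 < eps -> exists (A : set X) (N : nat), nbhs x A /\
  forall n y, (N <= n)%N -> A y -> V x - eps < Vs n y.
Proof.
move=> e0; have /andP[t0 t1] := V_bnd x.
case: (lerP 0 (V x - eps)) => [le0|gt0]; last first.
  exists setT, 0%N; split; first exact: filterT.
  move=> n y _ _; have /andP[h1 _] := Vs_bnd n y; exact: lt_le_trans gt0 h1.
pose m : X := const_act (mixlott R a b hab (V x - eps) : Lott a b).
have ht : 0 <= V x - eps <= 1 by apply/andP; split => //; lra.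
have Vm : V m = V x - eps by exact: (Vmix_s _ _ _ hV ht).
have ng : ~ graph pstar (m, x).
  by rewrite /graph /= => /hVrep; rewrite Vm; lra.
have [A [B [N [nA [nB HN]]]]] := notLs _ ng.
exists B, N; split => // n y Nn By.
have := HN n m y Nn (nbhs_singleton nA) By.
have [hs hr] := hVs n.
have Vsm : Vs n m = V x - eps by exact: (Vmix_s _ _ _ hs ht).
move=> H; rewrite ltNge; apply/negP => H2; apply: H; apply/hr.
by rewrite Vsm.
Qed.

Lemma local (x : X) (eps : R) : 0 < eps -> exists (A : set X) (N : nat), nbhs x A /\
  forall n y, (N <= n)%N -> A y -> `|Vs n y - V y| < eps.
Proof.
move=> e0.
have e2 : 0 < eps / 2 by rewrite divr_gt0.
have [A1 [N1 [nA1 H1]]] := upper x (eps / 2) e2.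
have [A2 [N2 [nA2 H2]]] := lower x (eps / 2) e2.
have nA3 : \forall y \near x, `|V x - V y| < eps / 2.
  by have [hc _] := hV; exact: (cvgrPdist_lt V (V x)).1 (hc x) _ e2.
exists (A1 `&` A2 `&` [set y | `|V x - V y| < eps / 2]), (maxn N1 N2).
split; first by apply: filterI => //; apply: filterI.
move=> n y Nn [[A1y A2y] A3y].
have h1 := H1 n y (leq_trans (leq_maxl _ _) Nn) A1y.
have h2 := H2 n y (leq_trans (leq_maxr _ _) Nn) A2y.
move: A3y; rewrite /= !ltr_norml => /andP[h3 h4].
apply/andP; split; lra.
Qed.

Lemma unif (K : set X) : compact K -> forall eps : R, 0 < eps ->
  \forall k \near \oo, forall x, K x -> `|Vs k x - V x| < eps.
Proof.
move=> cK eps e0.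
have := (compact_near_coveringP K).1 cK nat \oo (fun n y => `|Vs n y - V y| < eps) _.
apply => x Kx.
have [A [N [nA HA]]] := local x eps e0.
exists (A, [set n | (N <= n)%N]) => /=.
  by split => //; exists N.
by move=> [y n] /= [Ay Nn]; exact: HA.
Qed.

End Key.

Theorem mainTheorem8 (R : realType) (a b : R) (hab : a < b) (S : finType)
  (hS : [set: S] !=set0)
  (B : nat -> Act a b S * Act a b S)
  (hB : seq_experiments B) (hrec : recovers B)
  (pstar : Act a b S -> Act a b S -> Prop)
  (prefs : nat -> Act a b S -> Act a b S -> Prop)
  (hstar : is_preference pstar) (hstar_wm : weakly_monotone pstar)
  (hk : forall k, is_preference (prefs k) /\ weakly_monotone (prefs k) /\
          strongly_rationalizes (prefs k) B k (cset pstar))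
  (V : Act a b S -> R) (u : R -> R)
  (hV : standard_rep V u) (hVrep : represents pstar V)
  (Vs : nat -> Act a b S -> R) (us : nat -> R -> R)
  (hVs : forall k, standard_rep (Vs k) (us k) /\ represents (prefs k) (Vs k)) :
  (forall K : set (Act a b S), compact K ->
     forall eps : R, 0 < eps ->
       \forall k \near \oo, forall x, K x -> `|Vs k x - V x| < eps) /\
  (forall eps : R, 0 < eps ->
     \forall k \near \oo, forall x, Iab a b x -> `|us k x - u x| < eps).
Proof.
have hcc := hrec pstar hstar hstar_wm prefs hk.
have hLs : forall z, Ls (fun k => graph (prefs k)) z -> graph pstar z.
  by move=> z; rewrite hcc.2.
have hwk k : weakly_monotone (prefs k) by have [_ [? _]] := hk k.
split.
  exact: (@unif _ _ _ hab _ _ _ _ _ _ _ hLs hstar_wm hV hVrep hVs hwk).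
move=> eps e0.
have cK : compact (Gd R a b hab S @` Iab a b).
  exact: continuous_compact (Gd_cont R a b hab S) (@segment_compact _ a b).
have := @unif _ _ _ hab _ _ _ _ _ _ _ hLs hstar_wm hV hVrep hVs hwk _ cK eps e0.
apply: filterS => k H x Ix.
have := H (Gd R a b hab S x) (ex_intro2 _ _ x Ix erefl).
by rewrite (V_dL R a b hab S (Vs k) (us k) x (hVs k).1 Ix) (V_dL R a b hab S V u x hV Ix).
Qed.
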